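(* Let $\mathbb{G}$ be an $E$-group. (i) If $\mathbb{G}$ is $2$-acyclic, then for every $g\in\mathbb{G}$ the set $\alpha_g:=\bigcap\{\alpha'\subseteq E: g\in\mathbb{G}[\alpha']\}$ satisfies $g\in\mathbb{G}[\alpha_g]$, so it is the unique $\subseteq$-minimal $\alpha'\subseteq E$ with $g\in\mathbb{G}[\alpha']$. (ii) If $\mathbb{G}$ is $3$-acyclic, then for every $\alpha\subseteq E$ and $g\in\mathbb{G}$, the coset $B=g\mathbb{G}[\alpha]$ and the set $\alpha_B:=\bigcap\{\alpha_h: h\in B\}$ (with $\alpha_h$ as in (i)) satisfy $\mathbb{G}[\alpha_B]\cap B\neq\emptyset$; thus $\alpha_B$ is the unique $\subseteq$-minimal $\alpha'\subseteq E$ with $\mathbb{G}[\alpha']\cap B\neq\emptyset$.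
   Context: Let $E$ be a finite set. An $E$-group is a group $\mathbb{G}$ together with an inclusion $E\subseteq\mathbb{G}$ such that $E$ generates $\mathbb{G}$ and every $e\in E$ satisfies $e\neq1$, $e^2=1$. For $\alpha\subseteq E$, $\mathbb{G}[\alpha]$ is the subgroup generated by $\alpha$. A coset cycle of length $n\ge2$ in $\mathbb{G}$ is a cyclically indexed family $(g_i,\alpha_i)_{i\in\mathbb{Z}_n}$ with $g_i\in\mathbb{G}$, $\alpha_i\subseteq E$, such that for all $i$: $g_{i+1}\in g_i\mathbb{G}[\alpha_i]$ and $g_i\mathbb{G}[\alpha_i\cap\alpha_{i-1}]\cap g_{i+1}\mathbb{G}[\alpha_i\cap\alpha_{i+1}]=\emptyset$. $\mathbb{G}$ is $N$-acyclic ($N\ge2$) if it admits no coset cycle of length $n$ with $2\le n\le N$. *)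

(* Defs.v *)
(* the group itself is an arbitrary (possibly infinite) group given explicitly. *)
From HB Require Import structures.
From mathcomp Require Import all_boot.
From Stdlib Require Import ClassicalEpsilon.
Set Implicit Arguments. Unset Strict Implicit. Unset Printing Implicit Defensive.

Record group := Group {
  gcar :> Type;
  gmul : gcar -> gcar -> gcar;
  ginv : gcar -> gcar;
  gone : gcar;
  gmulA : forall x y z, gmul x (gmul y z) = gmul (gmul x y) z;
  gmul1l : forall x, gmul gone x = x;
  gmulVl : forall x, gmul (ginv x) x = gone
}.

Definition pbool (P : Prop) : bool :=
  if excluded_middle_informative P then true else false.

Section EGroup.
Variables (E : finType) (G : group) (emb : E -> G).

Inductive gen (alpha : {set E}) : G -> Prop :=
  | gen_gen e : e \in alpha -> gen alpha (emb e)
  | gen_one : gen alpha (gone G)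
  | gen_mul x y : gen alpha x -> gen alpha y -> gen alpha (gmul x y)
  | gen_inv x : gen alpha x -> gen alpha (ginv x).

Definition in_coset (g : G) (alpha : {set E}) (x : G) : Prop :=
  exists2 h, gen alpha h & x = gmul g h.

Definition is_Egroup : Prop :=
  [/\ injective emb,
      (forall x : G, gen [set: E] x),
      (forall e, emb e <> gone G) &
      (forall e, gmul (emb e) (emb e) = gone G)].

(* coset cycle (g_i, alpha_i)_{i in Z_n}, indices as 'I_n with cyclic
   successor ordS and predecessor ord_pred *)
Definition coset_cycle (n : nat) (g : 'I_n -> G) (a : 'I_n -> {set E}) : Prop :=
  2 <= n /\
  forall i : 'I_n,
    in_coset (g i) (a i) (g (ordS i)) /\
    ~ (exists x, in_coset (g i) (a i :&: a (ord_pred i)) x /\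
                 in_coset (g (ordS i)) (a i :&: a (ordS i)) x).

Definition acyclic (N : nat) : Prop :=
  forall n, 2 <= n -> n <= N ->
  forall (g : 'I_n -> G) (a : 'I_n -> {set E}), ~ coset_cycle g a.

Definition alpha_of (g : G) : {set E} :=
  \bigcap_(a : {set E} | pbool (gen a g)) a.

Definition alpha_coset (g : G) (alpha : {set E}) : {set E} :=
  [set e | pbool (forall h, in_coset g alpha h -> e \in alpha_of h)].

End EGroup.

(* Main.v *)
Require Import Defs.
From mathcomp Require Import all_boot.
From Stdlib Require Import Classical ClassicalEpsilon.

Set Implicit Arguments. Unset Strict Implicit.
Section Aux.
Variables (E : finType) (G : group) (emb : E -> G).

Lemma gmulVr (x : G) : gmul x (ginv x) = gone G.
Proof.
set y := gmul x (ginv x).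
have yy : gmul y y = y.
  by rewrite /y -gmulA [gmul (ginv x) _]gmulA gmulVl gmul1l.
by rewrite -[y]gmul1l -(gmulVl y) -gmulA yy.
Qed.

Lemma gmul1r (x : G) : gmul x (gone G) = x.
Proof. by rewrite -(gmulVl x) gmulA gmulVr gmul1l. Qed.

Lemma gsolve (a b c : G) : gmul a b = c -> b = gmul (ginv a) c.
Proof. by move=> <-; rewrite gmulA gmulVl gmul1l. Qed.

Lemma gen_sub (A B : {set E}) x : A \subset B -> gen emb A x -> gen emb B x.
Proof.
move=> sAB; elim=> [e eA| |y z _ Hy _ Hz|y _ Hy].
- by apply: gen_gen; apply: (subsetP sAB).
- exact: gen_one.
- exact: gen_mul.
- exact: gen_inv.
Qed.

Lemma pboolP (P : Prop) : pbool P = true <-> P.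
Proof. by rewrite /pbool; case: excluded_middle_informative. Qed.

Lemma cap2 : acyclic emb 2 -> forall (A B : {set E}) x,
  gen emb A x -> gen emb B x -> gen emb (A :&: B) x.
Proof.
move=> ac A B x hA hB; apply: NNPP => hn.
apply: (ac 2 (leqnn 2) (leqnn 2)
   (fun i : 'I_2 => nth (gone G) [:: gone G; x] i)
   (fun i : 'I_2 => nth set0 [:: A; B] i)).
split=> // -[[|[|k]] Hi] //=; rewrite /ordS /ord_pred /= /modn /=; split.
- by exists x => //; rewrite gmul1l.
- case=> y [[u hu ->] [v hv e]]; apply: hn.
  rewrite gmul1l in e.
  have -> : x = gmul (gmul x v) (ginv v) by rewrite -gmulA gmulVr gmul1r.
  rewrite -e; apply: gen_mul => //; apply: gen_inv; (done || by rewrite setIC).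
- by exists (ginv x); [apply: gen_inv | rewrite gmulVr].
- case=> y [[u hu e1] [v hv e2]]; apply: hn.
  rewrite gmul1l in e2.
  have -> : x = gmul (gmul x u) (ginv u) by rewrite -gmulA gmulVr gmul1r.
  rewrite -e1 e2; apply: gen_mul; first (done || by rewrite setIC).
  by apply: gen_inv; (done || by rewrite setIC).
Qed.

Lemma part1 : is_Egroup emb -> acyclic emb 2 -> forall g : G,
  gen emb (alpha_of emb g) g.
Proof.
case=> _ hall _ _ ac g; rewrite /alpha_of.
apply: (big_ind (fun A => gen emb A g)) => //.
- by move=> A B; apply: cap2.
- by move=> A /pboolP.
Qed.

Lemma part1min (g : G) (a' : {set E}) : gen emb a' g -> alpha_of emb g \subset a'.
Proof. by move=> h; rewrite /alpha_of; apply: bigcap_inf; apply/pboolP. Qed.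

Lemma coset_trans (g h1 h2 : G) (A : {set E}) :
  in_coset emb g A h1 -> in_coset emb g A h2 -> in_coset emb h1 A h2.
Proof.
case=> u hu e1 [v hv e2]; exists (gmul (ginv u) v).
  by apply: gen_mul => //; apply: gen_inv.
by rewrite e1 e2 -gmulA [gmul u _]gmulA gmulVr gmul1l.
Qed.

Lemma coset_ext (g h : G) (A : {set E}) u :
  in_coset emb g A h -> gen emb A u -> in_coset emb g A (gmul h u).
Proof.
case=> v hv ->; exists (gmul v u); first exact: gen_mul.
by rewrite gmulA.
Qed.

Lemma key3 : acyclic emb 3 -> forall (g h1 h2 : G) (A B1 B2 : {set E}),
  in_coset emb g A h1 -> in_coset emb g A h2 ->
  gen emb B1 h1 -> gen emb B2 h2 ->
  exists h, gen emb (B1 :&: B2) h /\ in_coset emb g A h.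
Proof.
move=> ac3 g h1 h2 A B1 B2 c1 c2 g1 g2.
have ac2 : acyclic emb 2 by move=> n n2 n3; apply: ac3 => //; apply: leq_trans n3 _.
apply: NNPP => hn.
apply: (ac3 3 isT (leqnn 3)
   (fun i : 'I_3 => nth (gone G) [:: gone G; h1; h2] i)
   (fun i : 'I_3 => nth set0 [:: B1; A; B2] i)).
split=> // -[[|[|[|k]]] Hi] //=; rewrite /ordS /ord_pred /= /modn /=; split.
- by exists h1 => //; rewrite gmul1l.
- case=> y [[u hu ->] [v hv e]]; apply: hn; exists (gmul (gone G) u); split.
  + by rewrite gmul1l.
  + rewrite e; apply: coset_ext => //; apply: gen_sub hv; exact: subsetIr.
- exact: coset_trans c1 c2.
- case=> y [[u hu ->] [v hv e]]; apply: hn; exists (gmul h1 u); split.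
  + apply: cap2 => //.
      by apply: gen_mul => //; apply: gen_sub hu; exact: subsetIr.
    rewrite e; apply: gen_mul => //; apply: gen_sub hv; exact: subsetIr.
  + apply: coset_ext => //; apply: gen_sub hu; exact: subsetIl.
- by exists (ginv h2); [apply: gen_inv | rewrite gmulVr].
- case=> y [[u hu ->] [v hv e]]; apply: hn; exists (gmul h2 u); split.
  + by rewrite e gmul1l setIC.
  + apply: coset_ext => //; apply: gen_sub hu; exact: subsetIr.
Qed.

End Aux.

Theorem mainTheorem5 (E : finType) (G : group) (emb : E -> G) :
  is_Egroup emb ->
  (acyclic emb 2 ->
     forall g : G,
       gen emb (alpha_of emb g) g /\
       (forall a' : {set E}, gen emb a' g -> alpha_of emb g \subset a')) /\
  (acyclic emb 3 ->
     forall (alpha : {set E}) (g : G),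
       (exists h, gen emb (alpha_coset emb g alpha) h /\ in_coset emb g alpha h) /\
       (forall a' : {set E},
          (exists h, gen emb a' h /\ in_coset emb g alpha h) ->
          alpha_coset emb g alpha \subset a')).
Proof.
move=> hE; split.
  move=> ac g; split; first exact: part1.
  exact: part1min.
move=> ac3 alpha g.
have ac2 : acyclic emb 2 by move=> n n2 n3; apply: ac3 => //; apply: leq_trans n3 _.
split; last first.
  move=> a' [h [hg hc]]; apply/subsetP => e; rewrite inE => /pboolP H.
  exact: (subsetP (part1min hg)) (H h hc).
(* minimal cardinality element *)
pose P n := exists h, in_coset emb g alpha h /\ #|alpha_of emb h| = n.
have exP : exists n, P n.
  exists #|alpha_of emb g|; exists g; split => //.
  by exists (gone G); [exact: gen_one | rewrite gmul1r].
have Pdec : forall n, {P n} + {~ P n} by move=> n; apply: excluded_middle_informative.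
pose Pb n := if Pdec n then true else false.
have exPb : exists n, Pb n by case: exP => n Hn; exists n; rewrite /Pb; case: (Pdec _).
case: (ex_minnP exPb) => m Pm minm.
have [h0 [c0 card0]] : P m by move: Pm; rewrite /Pb; case: (Pdec _).
exists h0; split => //.
apply: gen_sub (part1 hE ac2 h0).
apply/subsetP => e eh0; rewrite inE; apply/pboolP => h ch.
have [h' [gh' ch']] := key3 ac3 c0 ch (part1 hE ac2 h0) (part1 hE ac2 h).
have sub := part1min gh'.
have sub0 : alpha_of emb h' \subset alpha_of emb h0 by apply: subset_trans sub (subsetIl _ _).
have : m <= #|alpha_of emb h'|.
  apply: minm; rewrite /Pb; case: (Pdec _) => // nP; exfalso; apply: nP; by exists h'.
rewrite -card0 => le.
have eq : alpha_of emb h' = alpha_of emb h0.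
  by apply/eqP; rewrite eqEcard sub0 le.
have : alpha_of emb h' \subset alpha_of emb h by apply: subset_trans sub (subsetIr _ _).
by rewrite eq => /subsetP; apply.
Qed.
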